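(* Let $G$ be a graph with $n$ nodes and graph Laplacian $\mathbf{L}$. Then a matrix $\mathbf{P}\in\mathbb{R}^{n\times d}$ is node- and adjacency-identifying if $\mathbf{L}=\mathbf{P}\mathbf{P}^T$.
   Context: Graphs are finite, undirected, without self-loops and without isolated nodes; $\mathbf{L}=\mathbf{D}-\mathbf{A}(G)$ with $\mathbf{D}$ the degree matrix and $\mathbf{A}(G)$ the adjacency matrix; $d_k>0$ is a fixed constant. For $\mathbf{W}^Q,\mathbf{W}^K\in\mathbb{R}^{d\times d}$ put $\tilde{\mathbf{P}}=\frac{1}{\sqrt{d_k}}\mathbf{P}\mathbf{W}^Q(\mathbf{P}\mathbf{W}^K)^T$. $\mathbf{P}$ is node-identifying if for some $\mathbf{W}^Q,\mathbf{W}^K$: $\tilde{\mathbf{P}}_{ij}=\max_k\tilde{\mathbf{P}}_{ik}\iff i=j$; adjacency-identifying if for some (possibly different) $\mathbf{W}^Q,\mathbf{W}^K$: $\tilde{\mathbf{P}}_{ij}=\max_k\tilde{\mathbf{P}}_{ik}\iff\mathbf{A}(G)_{ij}=1$. *)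

(* Defs.v *)
(* Reals are modelled by an arbitrary real closed field R
   (needed for Num.sqrt); this covers the real numbers. *)
From HB Require Import structures.
From mathcomp Require Import all_boot all_order all_algebra.
Set Implicit Arguments. Unset Strict Implicit. Unset Printing Implicit Defensive.
Import Order.TTheory GRing.Theory Num.Theory.
Local Open Scope ring_scope.

(* A graph on nodes 'I_n is given by an edge relation e : rel 'I_n.
   Simple undirected graph: e symmetric and irreflexive (hypotheses of the theorem). *)

Definition adjmx (R : nzRingType) (n : nat) (e : rel 'I_n) : 'M[R]_n :=
  \matrix_(i, j) (e i j)%:R.

Definition degree (n : nat) (e : rel 'I_n) (i : 'I_n) : nat := #|[pred j | e i j]|.

Definition degmx (R : nzRingType) (n : nat) (e : rel 'I_n) : 'M[R]_n :=
  \matrix_(i, j) ((i == j)%:R * (degree e i)%:R).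

Definition laplacian (R : nzRingType) (n : nat) (e : rel 'I_n) : 'M[R]_n :=
  degmx R e - adjmx R e.

Definition ptilde (R : rcfType) (n d : nat) (dk : R) (P : 'M[R]_(n, d))
  (WQ WK : 'M[R]_d) : 'M[R]_n :=
  (Num.sqrt dk)^-1 *: (P *m WQ *m (P *m WK)^T).

(* max_k M_ik  (seeded with M i i, which is itself one of the entries) *)
Definition rowmax (R : realDomainType) (n : nat) (M : 'M[R]_n) (i : 'I_n) : R :=
  \big[Num.max/M i i]_(k < n) M i k.

Definition node_identifying (R : rcfType) (n d : nat) (dk : R) (P : 'M[R]_(n, d)) : Prop :=
  exists WQ WK : 'M[R]_d, forall i j : 'I_n,
    ptilde dk P WQ WK i j = rowmax (ptilde dk P WQ WK) i <-> i = j.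

Definition adjacency_identifying (R : rcfType) (n d : nat) (e : rel 'I_n) (dk : R)
  (P : 'M[R]_(n, d)) : Prop :=
  exists WQ WK : 'M[R]_d, forall i j : 'I_n,
    ptilde dk P WQ WK i j = rowmax (ptilde dk P WQ WK) i <-> adjmx R e i j = 1.

(* Main.v *)
Require Import Defs.
From HB Require Import structures.
From mathcomp Require Import all_boot all_order all_algebra.
From mathcomp Require Import lra.
Import Order.TTheory GRing.Theory Num.Theory.
Local Open Scope ring_scope.

Lemma big_max_ge (R : realDomainType) (I : Type) (r : seq I) (F : I -> R) x0 v :
  (v <= x0) || has (fun k => v <= F k) r -> v <= \big[Num.max/x0]_(k <- r) F k.
Proof.
elim: r => [|a r IH] /=; first by rewrite orbF big_nil.
rewrite big_cons le_max => /orP[H|/orP[H|H]]; first by rewrite IH ?H ?orbT.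
  by rewrite H.
by rewrite IH ?H ?orbT.
Qed.

Lemma big_max_le (R : realDomainType) (I : Type) (r : seq I) (F : I -> R) x0 v :
  x0 <= v -> (forall k, F k <= v) -> \big[Num.max/x0]_(k <- r) F k <= v.
Proof.
move=> H0 HF; elim: r => [|a r IH]; first by rewrite big_nil.
by rewrite big_cons ge_max HF IH.
Qed.

Lemma rowmax_eq (R : realDomainType) n (M : 'M[R]_n) i v k0 :
  (forall k, M i k <= v) -> M i k0 = v -> rowmax M i = v.
Proof.
move=> Hle Hk0; apply/eqP; rewrite eq_le; apply/andP; split.
  by apply: big_max_le.
apply: big_max_ge; apply/orP; right; apply/hasP; exists k0.
  by rewrite mem_index_enum.
by rewrite Hk0.
Qed.

Lemma e01_lem (K : realDomainType) (b : bool) : (0 <= b%:R :> K) && (b%:R <= 1 :> K).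
Proof. by case: b; rewrite /= ?lexx ?ler01 ?mulr1n. Qed.

Theorem lemmaF7 (R : rcfType) (n d : nat) (e : rel 'I_n) (dk : R)
  (dk_gt0 : 0 < dk)
  (e_sym : symmetric e) (e_irr : irreflexive e)
  (no_isolated : forall i : 'I_n, exists j : 'I_n, e i j)
  (P : 'M[R]_(n, d))
  (HL : laplacian R e = P *m P^T) :
  node_identifying dk P /\ adjacency_identifying e dk P.
Proof.
have c_gt0 : 0 < (Num.sqrt dk)^-1 by rewrite invr_gt0 sqrtr_gt0.
set c := (Num.sqrt dk)^-1 in c_gt0.
have Lij : forall i j, laplacian R e i j = (i == j)%:R * (degree e i)%:R - (e i j)%:R.
  by move=> i j; rewrite /laplacian !mxE.
have deg_gt0 : forall i, 0 < (degree e i)%:R :> R.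
  move=> i; rewrite ltr0n; case: (no_isolated i) => j hj.
  by apply/card_gt0P; exists j.
have e01 := @e01_lem R.
split.
- exists 1%:M, 1%:M => i j.
  have E : forall k, ptilde dk P 1%:M 1%:M i k = c * laplacian R e i k.
    by move=> k; rewrite /ptilde !mulmx1 -HL mxE.
  have Hrm : rowmax (ptilde dk P 1%:M 1%:M) i = c * (degree e i)%:R.
    apply: (@rowmax_eq _ _ _ _ _ i); last by rewrite E Lij eqxx e_irr mul1r subr0.
    move=> k; rewrite E Lij ler_pM2l //; case: eqP => _.
      by move: (e01 (e i k)) => /andP[]; rewrite mul1r; lra.
    by move: (e01 (e i k)) (deg_gt0 i) => /andP[]; rewrite mul0r; lra.
  rewrite Hrm E Lij; split; last by move=> <-; rewrite eqxx e_irr mul1r subr0.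
  case: eqP => // _; rewrite mul0r => H; exfalso.
  move: (e01 (e i j)) (deg_gt0 i) => /andP[] h1 h2 h3.
  have : c * (0 - (e i j)%:R) <= 0 by rewrite pmulr_rle0 //; lra.
  have : 0 < c * (degree e i)%:R by rewrite mulr_gt0.
  lra.
- exists (- 1%:M), 1%:M => i j.
  have E : forall k, ptilde dk P (- 1%:M) 1%:M i k = - (c * laplacian R e i k).
    by move=> k; rewrite /ptilde !mulmx1 mulmxN mulmx1 mulNmx -HL !mxE mulrN.
  case: (no_isolated i) => k0 hk0.
  have Hrm : rowmax (ptilde dk P (- 1%:M) 1%:M) i = c.
    apply: (@rowmax_eq _ _ _ _ _ k0); last first.
      rewrite E Lij hk0; case: eqP => [Eik|_]; first by rewrite Eik e_irr in hk0.
      by rewrite mul0r sub0r mulrN opprK mulr1.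
    move=> k; rewrite E Lij; case: eqP => [<-|_].
      rewrite e_irr mul1r subr0; have := mulr_gt0 c_gt0 (deg_gt0 i); lra.
    rewrite mul0r sub0r mulrN opprK; move: (e01 (e i k)) => /andP[] h1 h2.
    by rewrite -{2}(mulr1 c) ler_pM2l.
  rewrite Hrm E Lij /adjmx mxE; case: eqP => [Eij|_].
    rewrite -Eij e_irr mul1r subr0; split => H; last by move: H; rewrite /= mulr0n => /esym/eqP; rewrite oner_eq0.
    exfalso; have := mulr_gt0 c_gt0 (deg_gt0 i); lra.
  rewrite mul0r sub0r mulrN opprK; case: (e i j) => /=.
    by rewrite mulr1.
  rewrite mulr0; split => H; exfalso; [lra | by move: H; rewrite /= mulr0n => /esym/eqP; rewrite oner_eq0].
Qed.
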